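(* For every integer $N\ge 0$, let $T_{2\times 3}(8,N)$ be the number of tilings of an $8\times n$ rectangle, $n=3N/4$, by $N$ tiles of size $2\times 3$ (and $0$ if $3N/4\notin\mathbb{Z}$). Then, as formal power series, \[ \sum_{N\ge 0} T_{2\times 3}(8,N)\,z^N=\frac{(1-z^4)^2}{1-3z^4+z^{12}-z^{16}}. \]
   Context: A tiling of an $m\times n$ rectangle (width $m$, length $n$, made of $mn$ unit squares) by $a\times b$ tiles is a partition of the rectangle into non-overlapping axis-parallel $a\times b$ rectangles with integer corner coordinates, each placed in either of its two orientations. Tilings related by reflections or rotations of the rectangle are counted as distinct. The empty tiling counts once for $N=0$. *)

(* Defs.v *)
From HB Require Import structures.
From mathcomp Require Import all_boot all_order all_algebra.
Set Implicit Arguments. Unset Strict Implicit. Unset Printing Implicit Defensive.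
Import GRing.Theory Num.Theory.

(* Unit cells of an m x n rectangle: (i, j) is the square [i,i+1] x [j,j+1],
   0 <= i < m (width direction), 0 <= j < n (length direction). *)
Definition cell (m n : nat) := ('I_m * 'I_n)%type.

Definition rect_at (m n x y w h : nat) : {set cell m n} :=
  [set c : cell m n | (x <= c.1 < x + w) && (y <= c.2 < y + h)].

Definition is_tile (m n a b : nat) (B : {set cell m n}) : bool :=
  [exists x : 'I_m.+1, exists y : 'I_n.+1,
     ((x + a <= m) && (y + b <= n) && (B == rect_at m n x y a b))
  || ((x + b <= m) && (y + a <= n) && (B == rect_at m n x y b a))].

Definition is_tiling (m n a b : nat) (P : {set {set cell m n}}) : bool :=
  finset.partition P [set: cell m n] && [forall B in P, @is_tile m n a b B].

Definition num_tilings (m n a b N : nat) : nat :=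
  #|[set P : {set {set cell m n}} | @is_tiling m n a b P & #|P| == N]|.

Definition T23_8 (N : nat) : nat :=
  if 4 %| 3 * N then num_tilings 8 (3 * N %/ 4) 2 3 N else 0.

Local Open Scope ring_scope.
Definition gf_num : {poly int} := (1 - 'X^4) ^+ 2.
Definition gf_den : {poly int} := 1 - 3%:P * 'X^4 + 'X^12 - 'X^16.

(* Main.v *)
Require Import Defs.
From HB Require Import structures.
From mathcomp Require Import all_boot all_order all_algebra.
From mathcomp Require Import zify ring.
Set Implicit Arguments. Unset Strict Implicit. Unset Printing Implicit Defensive.

Section First.
Variables (T : finType) (tp : {set T} -> bool).

Definition tcount (S : {set T}) :=
  #|[set P : {set {set T}} | partition P S & [forall B in P, tp B]]|.

Lemma tcount0 : tcount set0 = 1.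
Proof.
rewrite /tcount (_ : [set P | _ & _] = [set set0]) ?cards1 //.
apply/setP => P; rewrite !inE partition_set0.
case: eqP => [->|] //=; apply/forallP => B; by rewrite inE.
Qed.

Lemma tcount_first (S : {set T}) c : c \in S ->
  tcount S = \sum_(B : {set T} | [&& tp B, c \in B & B \subset S]) tcount (S :\: B).
Proof.
move=> cS; rewrite /tcount.
set X := [set P | _ & _].
rewrite -sum1_card (partition_big (fun P => pblock P c) (fun B => [&& tp B, c \in B & B \subset S])) /=; last first.
  move=> P; rewrite inE => /andP[pP /forall_inP tP].
  have cc : c \in cover P by rewrite (cover_partition pP).
  have bP := pblock_mem cc.
  by rewrite tP //= mem_pblock cc /= (partitionS pP bP).
apply: eq_bigr => B /and3P[tB cB BS].
have -> : \sum_(P | (P \in X) && (pblock P c == B)) 1 = #|[set P in X | pblock P c == B]|.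
  by rewrite -sum1_card; apply: eq_bigl => P; rewrite inE.
set Y := [set P : {set {set T}} | partition P (S :\: B) & [forall B in P, tp B]].
have BnQ : forall Q, Q \in Y -> B \notin Q.
  move=> Q; rewrite inE => /andP[qP _]; apply/negP => BQ.
  have : c \in cover Q by apply/bigcupP; exists B.
  by rewrite (cover_partition qP) inE cB.
have -> : [set P in X | pblock P c == B] = (fun Q => B |: Q) @: Y.
  apply/setP => P; rewrite inE; apply/andP/imsetP.
  - rewrite inE => -[/andP[pP /forall_inP tP] /eqP pb].
    have cc : c \in cover P by rewrite (cover_partition pP).
    have bP : B \in P by rewrite -pb; exact: pblock_mem.
    exists (P :\ B); last by rewrite setD1K.
    rewrite inE (partitionD1 pP bP) /=; apply/forall_inP => A; rewrite inE => /andP[_ ?].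
    exact: tP.
  - move=> [Q QY ->]; have := BnQ _ QY; move: QY; rewrite inE => /andP[qP /forall_inP tQ] BQ.
    have B0 : B != set0 by apply/set0Pn; exists c.
    have dis : [disjoint B & S :\: B].
      by rewrite -setI_eq0; apply/eqP/setP => x; rewrite !inE; case: (x \in B); rewrite ?andbF.
    have pU := partitionU1 qP B0 dis.
    rewrite (_ : B :|: S :\: B = S) in pU; last first.
      apply/setP => x; rewrite !inE; case xB: (x \in B) => //=; by rewrite (subsetP BS).
    rewrite inE pU /=; split.
      apply/forall_inP => A; rewrite !inE => /orP[/eqP->//|]; exact: tQ.
    apply/eqP; apply: def_pblock => //; first exact: partition_trivIset pU.
    by rewrite !inE eqxx.
rewrite card_in_imset // => Q1 Q2 Y1 Y2 /= E.
by rewrite -(setU1K (BnQ _ Y1)) E setU1K // BnQ.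
Qed.
End First.

Definition okp (d : seq nat) i0 w :=
  (i0 + w <= 8) && all (fun i => nth 0 d i == 0) (iota i0 w).
Definition place (d : seq nat) i0 w h :=
  mkseq (fun i => if (i0 <= i < i0 + w) then h else nth 0 d i) 8.

Fixpoint F (next : seq nat -> nat) (L k : nat) (d : seq nat) : nat :=
  match k with
  | 0 => 0
  | k'.+1 =>
    if 0 \in d then
      (if okp d (index 0 d) 2 && (3 <= L) then F next L k' (place d (index 0 d) 2 3) else 0) +
      (if okp d (index 0 d) 3 && (2 <= L) then F next L k' (place d (index 0 d) 3 2) else 0)
    else next (map predn d)
  end.

Fixpoint G (L : nat) (d : seq nat) : nat :=
  match L with 0 => 1 | L'.+1 => F (G L') L'.+1 9 d end.

Lemma okpP d i0 w : reflect (i0 + w <= 8 /\ forall i, i0 <= i < i0 + w -> nth 0 d i = 0) (okp d i0 w).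
Proof.
apply: (iffP andP) => -[H1 H2]; split => //.
  by move=> i Hi; apply/eqP; apply: (allP H2); rewrite mem_iota.
by apply/allP => i; rewrite mem_iota => /H2 ->.
Qed.

Lemma size_place d i0 w h : size (place d i0 w h) = 8.
Proof. by rewrite size_mkseq. Qed.

Lemma nth_place d i0 w h i : i < 8 ->
  nth 0 (place d i0 w h) i = if (i0 <= i < i0 + w) then h else nth 0 d i.
Proof. by move=> Hi; rewrite nth_mkseq. Qed.

Lemma index_place d i0 w h : 0 < w -> 0 < h -> i0 = index 0 d -> i0 < 8 ->
  i0 < index 0 (place d i0 w h).
Proof.
move=> w0 h0 Hi0 i8; rewrite ltnNge; apply/negP => Hle.
set p := place d i0 w h in Hle *.
have jsz : index 0 p < size p by rewrite size_place; lia.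
have p0 : 0 \in p by rewrite -index_mem.
have := nth_index 0 p0; rewrite nth_place; last by lia.
case: ifP => [/andP[H1 H2]|Hn Hz]; first by lia.
have jl : index 0 p < index 0 d by move: Hn Hle; rewrite -Hi0; lia.
by have := before_find 0 jl; rewrite /= Hz eqxx.
Qed.

Section Geo.
Variable n : nat.
Definition reg j0 (d : seq nat) : {set cell 8 n} :=
  [set c : cell 8 n | j0 + nth 0 d c.1 <= c.2].
Local Notation tp := (@is_tile 8 n 2 3).
Local Notation tc := (tcount tp).

Lemma reg_empty j0 d : n <= j0 -> reg j0 d = set0.
Proof.
move=> H; apply/setP => c; rewrite !inE; apply/negbTE; rewrite -ltnNge; have := ltn_ord c.2; by move=> h; apply: (leq_trans h); apply: leq_trans H (leq_addr _ _).
Qed.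

Lemma reg_shift j0 d : size d = 8 -> 0 \notin d -> reg j0 d = reg j0.+1 (map predn d).
Proof.
move=> sd d0; apply/setP => c; rewrite !inE (nth_map 0); last by rewrite sd.
have : nth 0 d c.1 != 0.
  by apply: contraNneq d0 => <-; apply: mem_nth; rewrite sd.
case: (nth 0 d c.1) => // m _ /=; by rewrite addSnnS.
Qed.

Lemma rect_in d j0 (x y w h : nat) (c0 : cell 8 n) : size d = 8 ->
  x + w <= 8 -> y + h <= n -> 0 < w -> 0 < h ->
  c0.1 = index 0 d :> nat -> c0.2 = j0 :> nat ->
  c0 \in rect_at 8 n x y w h -> rect_at 8 n x y w h \subset reg j0 d ->
  [/\ x = index 0 d, y = j0 & forall i, x <= i < x + w -> nth 0 d i = 0].
Proof.
move=> sd xw yh w0 h0 c01 c02 Hc0 Hsub.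
have x8 : x < 8 by lia.
have yn : y < n by lia.
have := subsetP Hsub (Ordinal x8, Ordinal yn); rewrite !inE /= => H1.
move: Hc0; rewrite inE c01 c02 => /andP[/andP[a1 a2] /andP[b1 b2]].
have H2 := H1 ltac:(lia).
have yj : y = j0 by lia.
have dx : nth 0 d x = 0 by lia.
have xi : x = index 0 d.
  case: (ltnP x (index 0 d)) => Hx; last by lia.
  by have := before_find 0 Hx; rewrite /= dx eqxx.
split => // i Hi.
have i8 : i < 8 by lia.
have j0n : j0 < n by lia.
have := subsetP Hsub (Ordinal i8, Ordinal j0n); rewrite !inE /=.
move=> H; have := H ltac:(lia); lia.
Qed.

Lemma rect_sub d j0 w h : size d = 8 -> 
  (forall i, index 0 d <= i < index 0 d + w -> nth 0 d i = 0) ->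
  rect_at 8 n (index 0 d) j0 w h \subset reg j0 d.
Proof.
move=> sd Hz; apply/subsetP => c; rewrite !inE => /andP[/andP[a1 a2] /andP[b1 b2]].
rewrite Hz //; lia.
Qed.

Lemma rect_diff d j0 w h : size d = 8 ->
  (forall i, index 0 d <= i < index 0 d + w -> nth 0 d i = 0) ->
  reg j0 d :\: rect_at 8 n (index 0 d) j0 w h = reg j0 (place d (index 0 d) w h).
Proof.
move=> sd Hz; apply/setP => c; rewrite !inE nth_place //.
case: ifP => Hr; last by [].
rewrite (Hz _ Hr) addn0 /=; apply/idP/idP => H; lia.
Qed.

Lemma tile_rect d j0 L w h : size d = 8 -> j0 + L = n -> (w, h) \in [:: (2, 3); (3, 2)] ->
  okp d (index 0 d) w -> h <= L -> tp (rect_at 8 n (index 0 d) j0 w h).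
Proof.
move=> sd jL wh /okpP[H1 _] hL.
have i9 : index 0 d < 9 by lia.
have jn : j0 < n.+1 by lia.
apply/existsP; exists (Ordinal i9); apply/existsP; exists (Ordinal jn); rewrite /=.
move: wh; rewrite !inE => /orP[] /eqP [Hw Hh]; subst w h; rewrite eqxx !andbT.
  by apply/orP; left; apply/andP; split; lia.
by apply/orP; right; apply/andP; split; lia.
Qed.

Lemma tiles_key j0 L d (c0 : cell 8 n) : size d = 8 -> j0 + L = n ->
  c0.1 = index 0 d :> nat -> c0.2 = j0 :> nat -> forall B,
  [&& tp B, c0 \in B & B \subset reg j0 d] =
  ((okp d (index 0 d) 2 && (3 <= L)) && (B == rect_at 8 n (index 0 d) j0 2 3)) ||
  ((okp d (index 0 d) 3 && (2 <= L)) && (B == rect_at 8 n (index 0 d) j0 3 2)).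
Proof.
move=> sd jL c01 c02 B; apply/idP/idP.
- move/and3P=> [/existsP[x /existsP[y /orP[H|H]]] cB BS];
    move: H => /andP[/andP[xw yh] /eqP EB]; subst B.
  + have [Hx Hy Hz] := rect_in sd xw yh (erefl _) (erefl _) c01 c02 cB BS.
    rewrite Hx Hy eqxx andbT /=; apply/orP; left; apply/andP; split; last by lia.
    by apply/okpP; split; [lia | move=> i Hi; apply: Hz; rewrite Hx].
  + have [Hx Hy Hz] := rect_in sd xw yh (erefl _) (erefl _) c01 c02 cB BS.
    rewrite Hx Hy eqxx andbT /=; apply/orP; right; apply/andP; split; last by lia.
    by apply/okpP; split; [lia | move=> i Hi; apply: Hz; rewrite Hx].
- case/orP => /andP[/andP[ok hL] /eqP->].
  + have := ok => /okpP[H1 H2].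
    rewrite (tile_rect sd jL _ ok hL) ?inE ?eqxx //= (rect_sub _ _ sd H2) andbT.
    rewrite c01 c02; apply/and3P; split; lia.
  + have := ok => /okpP[H1 H2].
    rewrite (tile_rect sd jL _ ok hL) ?inE ?eqxx ?orbT //= (rect_sub _ _ sd H2) andbT.
    rewrite c01 c02; apply/and3P; split; lia.
Qed.
End Geo.

Section Geo2.
Variable n : nat.
Local Notation tp := (@is_tile 8 n 2 3).
Local Notation tc := (tcount tp).

Lemma tiles_sum j0 L d (c0 : cell 8 n) : size d = 8 -> j0 + L = n ->
  c0.1 = index 0 d :> nat -> c0.2 = j0 :> nat ->
  \sum_(B | [&& tp B, c0 \in B & B \subset reg n j0 d]) tc (reg n j0 d :\: B) =
  (if okp d (index 0 d) 2 && (3 <= L) then tc (reg n j0 (place d (index 0 d) 2 3)) else 0) +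
  (if okp d (index 0 d) 3 && (2 <= L) then tc (reg n j0 (place d (index 0 d) 3 2)) else 0).
Proof.
move=> sd jL c01 c02; rewrite (eq_bigl _ _ (tiles_key sd jL c01 c02)).
set R1 := rect_at 8 n (index 0 d) j0 2 3; set R2 := rect_at 8 n (index 0 d) j0 3 2.
have Hd1 : okp d (index 0 d) 2 -> tc (reg n j0 d :\: R1) = tc (reg n j0 (place d (index 0 d) 2 3)).
  by move=> /okpP[_ H]; rewrite /R1 rect_diff.
have Hd2 : okp d (index 0 d) 3 -> tc (reg n j0 d :\: R2) = tc (reg n j0 (place d (index 0 d) 3 2)).
  by move=> /okpP[_ H]; rewrite /R2 rect_diff.
case E1: (okp d (index 0 d) 2 && (3 <= L)); case E2: (okp d (index 0 d) 3 && (2 <= L)) => /=.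
- have neq : R1 != R2.
    move: E2 => /andP[/okpP[H1 _] HL].
    have i8 : index 0 d + 2 < 8 by lia.
    have jn : j0 < n by lia.
    apply/negP => /eqP E.
    have : (Ordinal i8, Ordinal jn) \in R2 by rewrite inE /=; apply/and3P; split; lia.
    rewrite -E inE /=; lia.
  rewrite (bigD1 R1) /= ?eqxx //; rewrite (eq_bigl (fun B => B == R2)); last first.
    move=> B; case: (eqVneq B R1) => [->|]; first by rewrite (negbTE neq).
    by rewrite andbT.
  rewrite big_pred1_eq Hd1 ?Hd2 //; [by case/andP: E2 | by case/andP: E1].
- rewrite (eq_bigl (fun B => B == R1)) ?big_pred1_eq ?Hd1 ?addn0 //; first by case/andP: E1.
  by move=> B; rewrite orbF.
- rewrite (eq_bigl (fun B => B == R2)) ?big_pred1_eq ?Hd2 //; first by case/andP: E2.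
- by rewrite big_pred0.
Qed.
End Geo2.

Section Main.
Variable n : nat.
Local Notation tp := (@is_tile 8 n 2 3).
Local Notation tc := (tcount tp).

Lemma inner L' j0 (IH : forall e, size e = 8 -> tc (reg n j0.+1 e) = G L' e)
  (jL : j0 + L'.+1 = n) :
  forall k d, size d = 8 -> 8 - index 0 d < k -> tc (reg n j0 d) = F (G L') L'.+1 k d.
Proof.
elim=> [|k IHk] d sd Hk; first by lia.
rewrite /=; case: ifP => d0.
- have i8 : index 0 d < 8 by rewrite -sd index_mem.
  have jn : j0 < n by lia.
  rewrite (@tcount_first _ _ _ (Ordinal i8, Ordinal jn)); last first.
    by rewrite inE /= nth_index // addn0.
  rewrite (@tiles_sum n j0 L'.+1 d (Ordinal i8, Ordinal jn) sd jL (erefl _) (erefl _)).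
  congr (_ + _); case: ifP => // /andP[ok _]; apply: IHk; rewrite ?size_place //.
    by have := @index_place d (index 0 d) 2 3 erefl erefl erefl i8; lia.
  by have := @index_place d (index 0 d) 3 2 erefl erefl erefl i8; lia.
- by rewrite (@reg_shift n j0 d sd) ?d0 // IH // size_map.
Qed.

Lemma main_reg L : forall j0 d, j0 + L = n -> size d = 8 -> tc (reg n j0 d) = G L d.
Proof.
elim: L => [|L' IHL] j0 d jL sd.
  by rewrite reg_empty ?tcount0 //; lia.
change (G L'.+1 d) with (F (G L') L'.+1 9 d).
apply: (@inner L' j0) => //; last by lia.
by move=> e se; apply: IHL => //; lia.
Qed.

Lemma tc_full : tc [set: cell 8 n] = G n (nseq 8 0).
Proof.
have E : reg n 0 (nseq 8 0) = [set: cell 8 n].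
  by apply/setP => c; rewrite !inE nth_nseq; case: ifP.
have H := (main_reg (L:=n) (add0n n) (size_nseq 8 0)).
by rewrite -E.
Qed.
End Main.

Fixpoint cols (k : nat) (d : seq nat) : seq (seq nat) :=
  match k with
  | 0 => [::]
  | k'.+1 =>
    if 0 \in d then
      (if okp d (index 0 d) 2 then cols k' (place d (index 0 d) 2 3) else [::]) ++
      (if okp d (index 0 d) 3 then cols k' (place d (index 0 d) 3 2) else [::])
    else [:: map predn d]
  end.

Lemma sumn_cat s t : sumn (s ++ t) = sumn s + sumn t.
Proof. by elim: s => //= x s ->; rewrite addnA. Qed.

Lemma F_cols next L k d : 3 <= L -> F next L k d = sumn (map next (cols k d)).
Proof.
move=> HL; elim: k d => [|k IH] d //=.
have H2 : 2 <= L by lia.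
rewrite HL H2 !andbT; case: ifP => _ /=; last by rewrite addn0.
by rewrite map_cat sumn_cat; case: ifP => _; case: ifP => _ /=; rewrite ?IH.
Qed.

Lemma G_cols L d : 2 <= L -> G L.+1 d = sumn (map (G L) (cols 9 d)).
Proof. move=> HL; change (G L.+1 d) with (F (G L) L.+1 9 d); apply: F_cols; lia. Qed.

Definition S : seq (seq nat) := [:: [:: 0; 0; 0; 0; 0; 0; 0; 0]; [:: 2; 2; 2; 2; 2; 2; 2; 2]; [:: 2; 2; 1; 1; 1; 1; 1; 1]; [:: 1; 1; 1; 2; 2; 1; 1; 1]; [:: 1; 1; 1; 1; 1; 1; 2; 2]; [:: 1; 1; 1; 1; 1; 1; 1; 1]; [:: 1; 1; 0; 0; 0; 0; 0; 0]; [:: 0; 0; 0; 1; 1; 0; 0; 0]; [:: 0; 0; 0; 0; 0; 0; 1; 1]; [:: 0; 0; 2; 2; 2; 2; 2; 2]; [:: 0; 0; 1; 1; 1; 1; 1; 1]; [:: 1; 1; 1; 0; 0; 1; 1; 1]; [:: 2; 2; 2; 2; 2; 2; 0; 0]; [:: 1; 1; 1; 1; 1; 1; 0; 0]; [:: 2; 2; 0; 0; 0; 0; 0; 0]; [:: 0; 0; 0; 2; 2; 0; 0; 0]; [:: 0; 0; 0; 0; 0; 0; 2; 2]; [:: 1; 1; 2; 2; 2; 2; 2; 2]; [:: 2; 2; 2; 2; 2; 2; 1; 1]].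

Lemma S_closed : all (fun s => all (fun t => t \in S) (cols 9 s)) S.
Proof. by vm_compute. Qed.

Definition Am (w : seq nat) : seq nat :=
  [seq sumn [seq nth 0 w (index t S) | t <- cols 9 s] | s <- S].
Definition W L := map (G L) S.

Lemma W_step L : 2 <= L -> W L.+1 = Am (W L).
Proof.
move=> HL; rewrite /Am /W; apply/eq_in_map => s sS.
rewrite G_cols //; congr sumn; apply/eq_in_map => t tC.
have tS : t \in S by have := allP S_closed s sS => /allP; apply.
by rewrite (nth_map [::]) ?index_mem // nth_index.
Qed.

Definition vadd (v w : seq nat) := [seq x.1 + x.2 | x <- zip v w].

Lemma nth_vadd v w i : size v = size w -> nth 0 (vadd v w) i = nth 0 v i + nth 0 w i.
Proof.
move=> E; case: (ltnP i (size v)) => Hi.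
  by rewrite (nth_map (0, 0)) ?size_zip ?E ?minnn -?E // nth_zip.
by rewrite !nth_default ?size_map ?size_zip -?E ?minnn.
Qed.

Lemma size_Am w : size (Am w) = size S.
Proof. by rewrite size_map. Qed.

Lemma size_vadd v w : size v = size w -> size (vadd v w) = size v.
Proof. by move=> E; rewrite size_map size_zip E minnn. Qed.

Lemma sumn_add (T : Type) (s : seq T) f g :
  sumn [seq f x + g x | x <- s] = sumn (map f s) + sumn (map g s).
Proof. by elim: s => //= x s ->; lia. Qed.

Lemma Am_add v w : size v = size w -> Am (vadd v w) = vadd (Am v) (Am w).
Proof.
move=> E; apply: (@eq_from_nth _ 0); first by rewrite size_vadd ?size_Am.
move=> i; rewrite size_Am => Hi; rewrite nth_vadd ?size_Am //.
rewrite !(nth_map [::]) //.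
rewrite (eq_map (fun t => nth_vadd (index t S) E)) sumn_add //.
Qed.

Lemma iter_add m v w : size v = size w -> iter m Am (vadd v w) = vadd (iter m Am v) (iter m Am w).
Proof.
elim: m => //= m IH E; rewrite IH // Am_add //.
by case: m {IH} => //= [|m]; rewrite ?size_Am.
Qed.

Lemma W_iter m : W (m + 2) = iter m Am (W 2).
Proof. by elim: m => //= m <-; rewrite -W_step //; lia. Qed.

Lemma key_id : vadd (iter 12 Am (W 2)) (iter 3 Am (W 2)) =
  vadd (vadd (vadd (iter 9 Am (W 2)) (iter 9 Am (W 2))) (iter 9 Am (W 2))) (W 2).
Proof. by vm_compute. Qed.

Lemma size_iter m v : size v = size S -> size (iter m Am v) = size S.
Proof. by case: m => //= m; rewrite size_Am. Qed.

Lemma iter_rel m v1 v2 v3 v4 : size v1 = size S -> size v2 = size S ->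
  size v3 = size S -> size v4 = size S ->
  vadd v1 v2 = vadd (vadd (vadd v3 v3) v3) v4 ->
  nth 0 (iter m Am v1) 0 + nth 0 (iter m Am v2) 0 = 3 * nth 0 (iter m Am v3) 0 + nth 0 (iter m Am v4) 0.
Proof.
move=> s1 s2 s3 s4 E.
have := congr1 (fun v => nth 0 (iter m Am v) 0) E => /=.
rewrite !iter_add ?size_vadd ?s1 ?s2 ?s3 ?s4 //.
rewrite !nth_vadd ?size_vadd ?size_iter ?s1 ?s2 ?s3 ?s4 // => ->; lia.
Qed.

Definition c L := G L (nseq 8 0).

Lemma c_rec L : c (L + 12) + c (L + 3) = 3 * c (L + 9) + c L.
Proof.
case: (ltnP L 2) => HL.
  by case: L HL => [|[|L]] H; [vm_compute; reflexivity | vm_compute; reflexivity | lia].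
have sW : size (W 2) = size S by rewrite size_map.
have := iter_rel (L - 2) (size_iter 12 sW) (size_iter 3 sW) (size_iter 9 sW) sW key_id.
rewrite -!iterD -!W_iter.
have E : forall k, nth 0 (W k) 0 = c k by [].
rewrite !E.
have -> : L - 2 + 12 + 2 = L + 12 by lia.
have -> : L - 2 + 3 + 2 = L + 3 by lia.
have -> : L - 2 + 9 + 2 = L + 9 by lia.
have -> : L - 2 + 2 = L by lia.
by [].
Qed.

Lemma card_int m x w : x + w <= m -> #|[set i : 'I_m | x <= i < x + w]| = w.
Proof.
elim: w => [|w IH] H.
  apply/eqP; rewrite cards_eq0; apply/eqP/setP => i; rewrite !inE addn0.
  by apply/negbTE; rewrite negb_and -ltnNge orbC leqNgt orNb.
have xw : x + w < m by lia.
rewrite (_ : [set i : 'I_m | x <= i < x + w.+1] = Ordinal xw |: [set i : 'I_m | x <= i < x + w]).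
  rewrite cardsU1 IH; last by lia.
  by rewrite inE /= ltnn andbF.
apply/setP => i; rewrite !inE -val_eqE /=; apply/idP/idP.
  by move=> /andP[H1 H2]; apply/orP; case: (ltnP i (x + w)) => H3; [right; lia | left; lia].
by case/orP => [/eqP->|]; lia.
Qed.

Lemma card_rect m n x y w h : x + w <= m -> y + h <= n -> #|rect_at m n x y w h| = w * h.
Proof.
move=> Hx Hy.
rewrite (_ : rect_at m n x y w h = setX [set i : 'I_m | x <= i < x + w] [set j : 'I_n | y <= j < y + h]).
  by rewrite cardsX !card_int.
by apply/setP => c; rewrite !inE.
Qed.

Lemma card_tile m n B : @is_tile m n 2 3 B -> #|B| = 6.
Proof.
case/existsP => x /existsP[y /orP[]] /andP[/andP[H1 H2] /eqP->]; by rewrite card_rect.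
Qed.

Lemma tiling_card m (P : {set {set cell 8 m}}) : partition P [set: cell 8 m] ->
  (forall B, B \in P -> @is_tile 8 m 2 3 B) -> 6 * #|P| = 8 * m.
Proof.
move=> pP tP; have := card_partition pP.
rewrite cardsT.
rewrite card_prod.
rewrite !card_ord => ->.
rewrite (eq_bigr (fun _ => 6)); last by move=> B /tP /card_tile.
rewrite sum_nat_const.
apply: mulnC.
Qed.

Lemma num_eq m N : 6 * N = 8 * m ->
  num_tilings 8 m 2 3 N = tcount (@is_tile 8 m 2 3) [set: cell 8 m].
Proof.
move=> E; rewrite /num_tilings /tcount; apply: eq_card => P; rewrite !inE /is_tiling.
case: (boolP (partition P [set: cell 8 m])) => //= pP.
case: (boolP [forall B in P, @is_tile 8 m 2 3 B]) => //= /forall_inP tP.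
have H := tiling_card pP tP. rewrite -(@eqn_pmul2l 6) // H E eqxx. by [].
Qed.

Definition t N := if 4 %| N then c (3 * (N %/ 4)) else 0.

Lemma T_eq N : T23_8 N = t N.
Proof.
rewrite /T23_8 /t Gauss_dvdr //.
case: (boolP (4 %| N)) => // /dvdnP[k ->].
rewrite !mulnA !mulnK // num_eq ?tc_full //. by rewrite (mulnC k) !mulnA.
Qed.

Lemma t_rec M : t (M + 16) + t (M + 4) = 3 * t (M + 12) + t M.
Proof.
rewrite /t.
case: (boolP (4 %| M)) => [/dvdnP[k ->]|nM]; last by rewrite !dvdn_addl // (negbTE nM).
rewrite (_ : k * 4 + 16 = (k + 4) * 4); last by rewrite mulnDl.
rewrite (_ : k * 4 + 12 = (k + 3) * 4); last by rewrite mulnDl.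
rewrite (_ : k * 4 + 4 = (k + 1) * 4); last by rewrite mulnDl.
rewrite !dvdn_mull // !mulnK //.
have := c_rec (3 * k); rewrite !mulnDr => H; exact H.
Qed.

Import GRing.Theory Num.Theory.
Local Open Scope ring_scope.

Lemma sel (g : nat -> int) (a N : nat) :
  \sum_(k < N.+1) ((k : nat) == a)%:R * g k = if (a <= N)%N then g a else 0.
Proof.
elim: N => [|N IH].
  by rewrite big_ord1 /=; case: a => [|a] /=; rewrite ?mulr1n ?mulr0n ?mul1r ?mul0r.
rewrite big_ord_recr /= IH.
case: (ltngtP a N.+1) => H.
- have H1 : (a <= N)%N by [].
  by rewrite H1 mulr0n mul0r addr0.
- have H1 : (a <= N)%N = false by apply/negbTE; rewrite -ltnNge ltnW.
  have H2 : (a <= N.+1)%N = false by apply/negbTE; rewrite -ltnNge.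
  rewrite H1 ?H2 ?(eq_sym N.+1) ?(gtn_eqF H) /=; by rewrite ?mulr0n ?mulr1n ?mul0r ?mul1r ?add0r.
- subst a; rewrite ?ltnn ?leqnn ?eqxx /=; by rewrite ?mulr0n ?mulr1n ?mul0r ?mul1r ?add0r.
Qed.

Lemma den_coef k : gf_den`_k =
  (k == 0)%N%:R - 3 * (k == 4)%N%:R + (k == 12)%N%:R - (k == 16)%N%:R.
Proof. by rewrite /gf_den !(coefB, coefD, coef1, coefCM, coefXn). Qed.

Lemma num_coef k : gf_num`_k =
  (k == 0)%N%:R - 2 * (k == 4)%N%:R + (k == 8)%N%:R.
Proof.
rewrite /gf_num expr2 mulrBl mul1r mulrBr mulr1 -exprD !coefB coef1 !coefXn /=.
have -> : (4 + 4 = 8)%N by []. ring.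
Qed.

Theorem mainTheorem11 :
  forall N : nat,
    \sum_(k < N.+1) gf_den`_k * ((T23_8 (N - k)%N)%:Z) = gf_num`_N.
Proof.
move=> N.
rewrite (eq_bigr (fun k : 'I_N.+1 =>
   ((k : nat) == 0%N)%:R * (t (N - k))%:Z - 3 * (((k : nat) == 4%N)%:R * (t (N - k))%:Z)
   + ((k : nat) == 12%N)%:R * (t (N - k))%:Z - ((k : nat) == 16%N)%:R * (t (N - k))%:Z)); last first.
  by move=> k _; rewrite den_coef T_eq; ring.
rewrite !(sumrB, big_split) /= -mulr_sumr.
rewrite !(sel (fun k => (t (N - k))%:Z)) num_coef.
case: (ltnP N 16) => HN.
  move: N HN; do 16! (case => [_|]; first by vm_compute).
  by [].
set M := (N - 16)%N.
have EN : N = (M + 16)%N by rewrite /M subnK.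
have H1 : (N - 4 = M + 12)%N by rewrite EN -addnBA.
have H2 : (N - 12 = M + 4)%N by rewrite EN -addnBA.
have H3 : (N - 16 = M)%N by [].
rewrite (leq_trans _ HN) // (leq_trans _ HN) // (leq_trans _ HN) // ?leq0n ?subn0 H1 H2.
rewrite (gtn_eqF (_ : 0 < N)%N) ?(gtn_eqF (_ : 4 < N)%N) ?(gtn_eqF (_ : 8 < N)%N) ?(leq_trans _ HN) //.
have := t_rec M; rewrite -EN => E.
have := congr1 (fun x : nat => x%:Z) E; rewrite !PoszD ?PoszM => E'.
match type of E' with ?g => idtac g end.
rewrite !mulr0n mulr0 subr0 addr0.
have -> : (t N)%:Z - 3 * (t (M + 12))%:Z + (t (M + 4))%:Z - (t M)%:Z =
  ((t N)%:Z + (t (M + 4))%:Z) - (3%:Z * (t (M + 12))%:Z + (t M)%:Z) by ring.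
by rewrite E' subrr.
Qed.
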